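(* Let $p,q\ge2$ with $q-1=d(p-1)$ for a positive integer $d$. The embedding $j_1:F(p)\to F(q)$ determined by $x_i\mapsto x_{di}$ ($i\ge0$) is a quasi-isometric embedding with respect to the word metrics of $F(p)$ and $F(q)$.
   Context: For $r\ge2$, $F(r)$ is the group of piecewise-linear orientation-preserving homeomorphisms of $[0,1]$ with breakpoints in $\mathbb{Z}[1/r]$ and slopes integer powers of $r$, with presentation $\langle x_0,x_1,\dots\mid x_i^{-1}x_jx_i=x_{j+r-1}\ (i<j)\rangle$; it is generated by $x_0,\dots,x_{r-1}$ and its word metric is taken with respect to these generators. The assignment $x_i\mapsto x_{di}$ from the generators of $F(p)$ to $F(q)$ respects the relations and defines an injective homomorphism $j_1$. A map $f$ between metric spaces is a quasi-isometric embedding if there are constants $C\ge1$, $K\ge0$ with $\frac1C d(a,b)-K\le d(f(a),f(b))\le C d(a,b)+K$ for all $a,b$. *)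

(* Defs.v *)
From Stdlib Require Import Reals List Arith ClassicalEpsilon.
Import ListNotations.

(* A letter (i, false) is x_i, (i, true) is x_i^{-1}. *)
Definition letter := (nat * bool)%type.
Definition word := list letter.

Definition linv (l : letter) : letter := (fst l, negb (snd l)).
Definition winv (w : word) : word := rev (map linv w).

Inductive Feq (r : nat) : word -> word -> Prop :=
| Feq_refl w : Feq r w w
| Feq_sym u v : Feq r u v -> Feq r v u
| Feq_trans u v w : Feq r u v -> Feq r v w -> Feq r u w
| Feq_cancel u v x : Feq r (u ++ [x; linv x] ++ v) (u ++ v)
| Feq_rel u v i j : i < j ->
    Feq r (u ++ [(i, true); (j, false); (i, false)] ++ v)
          (u ++ [(j + r - 1, false)] ++ v).

Definition gen_word (r : nat) (u : word) : Prop :=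
  forall l, In l u -> fst l < r.

Definition is_wordlen (r : nat) (g : word) (n : nat) : Prop :=
  (exists u, gen_word r u /\ Feq r u g /\ length u = n) /\
  (forall u, gen_word r u -> Feq r u g -> n <= length u).

Definition wordlen (r : nat) (g : word) : nat :=
  epsilon (inhabits 0%nat) (is_wordlen r g).

Definition Fdist (r : nat) (a b : word) : nat := wordlen r (winv a ++ b).

Definition j1 (d : nat) (w : word) : word :=
  map (fun l => (d * fst l, snd l)) w.

(* Main.v *)
Require Import Defs.
From Stdlib Require Import Reals List Arith Lia Lra FunctionalExtensionality Bool Classical ClassicalEpsilon.
Import ListNotations.



Lemma Feq_ctx (r : nat) u v a b : Feq r u v -> Feq r (a ++ u ++ b) (a ++ v ++ b).
Proof.
  induction 1.
  - apply Feq_refl.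
  - apply Feq_sym; auto.
  - eapply Feq_trans; eauto.
  - pose proof (Feq_cancel r (a ++ u) (v ++ b) x) as H.
    rewrite <- !app_assoc in *. simpl in *. exact H.
  - pose proof (Feq_rel r (a ++ u) (v ++ b) i j H) as H1.
    rewrite <- !app_assoc in *. simpl in *. exact H1.
Qed.

Lemma Feq_app (r : nat) u u' v v' : Feq r u u' -> Feq r v v' -> Feq r (u ++ v) (u' ++ v').
Proof.
  intros H1 H2. apply Feq_trans with (u' ++ v).
  - pose proof (Feq_ctx r u u' [] v H1) as H. simpl in H. exact H.
  - pose proof (Feq_ctx r v v' u' [] H2) as H. rewrite !app_nil_r in H. exact H.
Qed.

Lemma Feq_cons (r : nat) l u v : Feq r u v -> Feq r (l :: u) (l :: v).
Proof. intro H. apply (Feq_app r [l] [l] u v (Feq_refl _ _) H). Qed.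

Lemma linv_inv l : linv (linv l) = l.
Proof. destruct l as [a b]; unfold linv; simpl; rewrite Bool.negb_involutive; auto. Qed.

Lemma winv_app u v : winv (u ++ v) = winv v ++ winv u.
Proof. unfold winv. rewrite map_app, rev_app_distr. auto. Qed.

Lemma winv_inv u : winv (winv u) = u.
Proof. unfold winv. rewrite map_rev, rev_involutive, map_map.
  rewrite <- (map_id u) at 2. apply map_ext. apply linv_inv. Qed.

Lemma Feq_cancel2 (r : nat) x : Feq r [x; linv x] [].
Proof. pose proof (Feq_cancel r [] [] x) as H. simpl in H. exact H. Qed.

Lemma Feq_winv_r (r : nat) u : Feq r (u ++ winv u) [].
Proof.
  induction u as [|l u IH].
  - apply Feq_refl.
  - change (l :: u) with ([l] ++ u). rewrite winv_app.
    unfold winv at 2. simpl.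
    apply Feq_trans with ([l] ++ (u ++ winv u) ++ [linv l]).
    + rewrite <- !app_assoc. apply Feq_refl.
    + apply Feq_trans with ([l] ++ [] ++ [linv l]).
      * apply (Feq_ctx r). exact IH.
      * simpl. apply (Feq_cancel2 r).
Qed.

Lemma Feq_winv_l (r : nat) u : Feq r (winv u ++ u) [].
Proof. pose proof (Feq_winv_r r (winv u)) as H. rewrite winv_inv in H. exact H. Qed.

Lemma Feq_winv (r : nat) u v : Feq r u v -> Feq r (winv u) (winv v).
Proof.
  intro H.
  (* winv u ~ winv u ++ v ++ winv v ~ winv u ++ u ++ winv v ~ winv v *)
  apply Feq_trans with (winv u ++ (v ++ winv v)).
  - pose proof (Feq_app r (winv u) (winv u) _ _ (Feq_refl _ _) (Feq_sym _ _ _ (Feq_winv_r r v))) as H1.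
    rewrite app_nil_r in H1. exact H1.
  - apply Feq_trans with (winv u ++ (u ++ winv v)).
    + apply (Feq_app r). apply Feq_refl. apply (Feq_app r). apply Feq_sym; exact H. apply Feq_refl.
    + rewrite app_assoc. pose proof (Feq_app r _ _ (winv v) (winv v) (Feq_winv_l r u) (Feq_refl _ _)) as H1.
      simpl in H1. exact H1.
Qed.

Lemma Feq_rel2 (r : nat) i j : i < j -> Feq r [(i, true); (j, false); (i, false)] [(j + r - 1, false)].
Proof. intro H. pose proof (Feq_rel r [] [] i j H) as H1. simpl in H1. exact H1. Qed.

Lemma Feq_swap_pos (r : nat) a i : a < i -> Feq r [(i, false); (a, false)] [(a, false); (i + r - 1, false)].
Proof.
  intro H.
  apply Feq_trans with ([(a, false)] ++ [(a, true); (i, false); (a, false)]).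
  - apply Feq_sym. pose proof (Feq_cancel r [] [(i,false);(a,false)] (a,false)) as H1.
    simpl in H1. simpl. exact H1.
  - apply (Feq_app r [(a,false)] [(a,false)] _ [(i + r - 1, false)]). apply Feq_refl. apply Feq_rel2; auto.
Qed.

Lemma Feq_push_gt (r : nat) k a : k < a -> Feq r [(k, true); (a, false)] [(a + r - 1, false); (k, true)].
Proof.
  intro H.
  apply Feq_trans with ([(k, true); (a, false); (k, false)] ++ [(k, true)]).
  - apply Feq_sym. pose proof (Feq_cancel r [(k, true); (a, false)] [] (k,false)) as H1.
    rewrite app_nil_r in H1. simpl in H1. simpl. exact H1.
  - apply (Feq_app r _ [(a + r - 1, false)] [(k,true)] [(k,true)]). apply Feq_rel2; auto. apply Feq_refl.
Qed.

Lemma Feq_push_lt (r : nat) k a : a < k -> Feq r [(k, true); (a, false)] [(a, false); (k + r - 1, true)].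
Proof.
  intro H.
  pose proof (Feq_winv r _ _ (Feq_swap_pos r a k H)) as H1.
  unfold winv in H1. simpl in H1.
  apply Feq_trans with ([(a, false)] ++ [(a, true); (k, true)] ++ [(a, false)]).
  - apply Feq_sym. pose proof (Feq_cancel r [] [(k,true);(a,false)] (a,false)) as H2.
    simpl in H2. simpl. exact H2.
  - apply Feq_trans with ([(a, false)] ++ [(k + r - 1, true); (a, true)] ++ [(a, false)]).
    + apply (Feq_ctx r). exact H1.
    + pose proof (Feq_cancel r [(a,false); (k + r - 1, true)] [] (a,true)) as H2.
      rewrite app_nil_r in H2. simpl in H2. simpl. exact H2.
Qed.



Definition stream := nat -> nat.
Definition point := (nat * stream)%type.
Definition scons (c : nat) (s : stream) : stream := fun n => match n with 0 => c | S n' => s n' end.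
Definition stl (s : stream) : stream := fun n => s (S n).

Lemma scons_eta s : scons (s 0) (stl s) = s.
Proof. apply functional_extensionality. intros [|n]; reflexivity. Qed.

Definition X (r a : nat) (x : point) : point :=
  let (m, s) := x in
  if m <? a then (m, s) else if m <? a + r then (a, scons (m - a) s) else (m - (r - 1), s).

Definition Xi (r a : nat) (x : point) : point :=
  let (m, s) := x in
  if m <? a then (m, s) else if m =? a then (a + s 0, stl s) else (m + (r - 1), s).

Definition actl (r : nat) (l : letter) : point -> point :=
  if snd l then Xi r (fst l) else X r (fst l).

Fixpoint act (r : nat) (w : word) (x : point) : point :=
  match w with [] => x | l :: w' => actl r l (act r w' x) end.

Definition valid (r : nat) (x : point) : Prop := forall n, snd x n < r.

Ltac natcases :=
  repeat match goal with
  | |- context [?a <? ?b] => destruct (Nat.ltb_spec a b)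
  | |- context [?a =? ?b] => destruct (Nat.eqb_spec a b)
  end.

Lemma Xi_X r a x : 1 <= r -> Xi r a (X r a x) = x.
Proof.
  intros Hr. destruct x as [m s]. unfold X.
  destruct (Nat.ltb_spec m a).
  - unfold Xi. natcases; auto; lia.
  - destruct (Nat.ltb_spec m (a + r)).
    + unfold Xi. natcases; try lia. simpl. f_equal. lia.
    + unfold Xi. natcases; try lia. f_equal. lia.
Qed.

Lemma X_Xi r a x : 1 <= r -> valid r x -> X r a (Xi r a x) = x.
Proof.
  intros Hr Hv. destruct x as [m s]. unfold valid in Hv; simpl in Hv. unfold Xi.
  destruct (Nat.ltb_spec m a).
  - unfold X. natcases; auto; lia.
  - destruct (Nat.eqb_spec m a).
    + subst. unfold X. specialize (Hv 0). natcases; try lia.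
      replace (a + s 0 - a) with (s 0) by lia. rewrite scons_eta. auto.
    + unfold X. natcases; try lia. f_equal. lia.
Qed.

Lemma X_valid r a x : valid r x -> valid r (X r a x).
Proof.
  destruct x as [m s]. unfold valid; simpl. intros Hv n. unfold X.
  natcases; simpl; auto. destruct n; simpl; auto; lia.
Qed.

Lemma Xi_valid r a x : valid r x -> valid r (Xi r a x).
Proof.
  destruct x as [m s]. unfold valid; simpl. intros Hv n. unfold Xi.
  natcases; simpl; auto. unfold stl. auto.
Qed.

Lemma actl_valid r l x : valid r x -> valid r (actl r l x).
Proof. unfold actl. destruct (snd l). apply Xi_valid. apply X_valid. Qed.

Lemma act_valid r w x : valid r x -> valid r (act r w x).
Proof. induction w; simpl; auto. intros H. apply actl_valid; auto. Qed.

Lemma act_app r u v x : act r (u ++ v) x = act r u (act r v x).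
Proof. induction u; simpl; auto. rewrite IHu; auto. Qed.

Lemma actl_linv r l x : 1 <= r -> valid r x -> actl r (linv l) (actl r l x) = x.
Proof.
  intros Hr Hv. destruct l as [a b]. unfold actl, linv. simpl. destruct b; simpl.
  - apply X_Xi; auto.
  - apply Xi_X; auto.
Qed.

Lemma actl_linv' r l x : 1 <= r -> valid r x -> actl r l (actl r (linv l) x) = x.
Proof. intros. rewrite <- (linv_inv l) at 1. apply actl_linv; auto. Qed.

Lemma X_comm r i j x : 1 <= r -> i < j -> X r j (X r i x) = X r i (X r (j + r - 1) x).
Proof.
  intros Hr Hij. destruct x as [m s].
  unfold X at 2. unfold X at 3.
  destruct (Nat.ltb_spec m i).
  - destruct (Nat.ltb_spec m (j + r - 1)); try lia.
    unfold X. natcases; auto; lia.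
  - destruct (Nat.ltb_spec m (i + r)).
    + destruct (Nat.ltb_spec m (j + r - 1)); try lia.
      unfold X. natcases; auto; lia.
    + destruct (Nat.ltb_spec m (j + r - 1)).
      * unfold X. natcases; auto; try lia.
      * destruct (Nat.ltb_spec m (j + r - 1 + r)).
        -- unfold X. natcases; try lia; f_equal; try lia. simpl. f_equal. lia. 
        -- unfold X. natcases; try lia; f_equal; try lia.
Qed.

Lemma Feq_act r u v : 1 <= r -> Feq r u v -> forall x, valid r x -> act r u x = act r v x.
Proof.
  intros Hr H. induction H; intros x0 Hx.
  - auto.
  - symmetry; auto.
  - rewrite IHFeq1; auto.
  - rewrite !act_app. simpl. rewrite actl_linv'; auto. apply act_valid; auto.
  - rewrite !act_app. simpl. f_equal. unfold actl; simpl.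
    rewrite X_comm; auto. rewrite Xi_X; auto.
Qed.

Lemma act_winv_l r w x : 1 <= r -> valid r x -> act r (winv w) (act r w x) = x.
Proof.
  intros Hr. revert x. induction w as [|l w IH]; intros x Hx; simpl; auto.
  change (l :: w) with ([l] ++ w). rewrite winv_app. rewrite act_app.
  unfold winv at 2. simpl. rewrite actl_linv; auto. apply act_valid; auto.
Qed.

Lemma act_winv_r r w x : 1 <= r -> valid r x -> act r w (act r (winv w) x) = x.
Proof.
  intros Hr Hx. pose proof (act_winv_l r (winv w) x Hr Hx) as H. rewrite winv_inv in H. exact H.
Qed.


Definition pos (L : list nat) : word := map (fun a => (a, false)) L.

Fixpoint tau (r : nat) (L : list nat) : nat :=
  match L with [] => 0 | a :: L' => Nat.max (a + r + (r - 1) * length L') (tau r L') end.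

Lemma pos_app L M : pos (L ++ M) = pos L ++ pos M.
Proof. unfold pos. apply map_app. Qed.

Lemma tau_ge_len r L : (r - 1) * length L <= tau r L.
Proof. induction L; simpl; [lia|]. nia. Qed.

Lemma tau_ge_elem r L a : In a L -> a + r <= tau r L.
Proof. induction L; simpl; [tauto|]. intros [->|H]; [lia|]. specialize (IHL H). lia. Qed.

Lemma tau_app1 r L b : tau r (L ++ [b]) = Nat.max (tau r L + (r - 1)) (b + r).
Proof.
  induction L as [|a L IH]; simpl. lia.
  rewrite IH, length_app. simpl. nia.
Qed.

Fixpoint pushR (r k : nat) (P : list nat) : list nat * option nat :=
  match P with
  | [] => ([], Some k)
  | a :: P0 =>
      if a =? k then (P0, None)
      else if k <? a then let (P1, o) := pushR r k P0 in ((a + r - 1) :: P1, o)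
      else let (P1, o) := pushR r (k + r - 1) P0 in (a :: P1, o)
  end.

Definition optw (o : option nat) : word := match o with None => [] | Some k => [(k, true)] end.

Lemma pushR_Feq r k P : Feq r ((k, true) :: pos P) (pos (fst (pushR r k P)) ++ optw (snd (pushR r k P))).
Proof.
  revert k. induction P as [|a P IH]; intro k; simpl.
  - apply Feq_refl.
  - destruct (Nat.eqb_spec a k).
    + subst. simpl. rewrite app_nil_r. exact (Feq_cancel r [] (pos P) (k, true)).
    + destruct (Nat.ltb_spec k a).
      * specialize (IH k). destruct (pushR r k P) as [P1 o]. simpl in *.
        apply Feq_trans with ([(a + r - 1, false); (k, true)] ++ pos P).
        -- apply (Feq_app r [(k,true);(a,false)] _ (pos P) (pos P)). apply Feq_push_gt; auto. apply Feq_refl.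
        -- apply (Feq_app r [(a + r - 1, false)] [(a + r - 1, false)] ((k,true) :: pos P)). apply Feq_refl. exact IH.
      * specialize (IH (k + r - 1)). destruct (pushR r (k + r - 1) P) as [P1 o]. simpl in *.
        apply Feq_trans with ([(a, false); (k + r - 1, true)] ++ pos P).
        -- apply (Feq_app r [(k,true);(a,false)] _ (pos P) (pos P)). apply Feq_push_lt; lia. apply Feq_refl.
        -- apply (Feq_app r [(a, false)] [(a, false)] ((k + r - 1,true) :: pos P)). apply Feq_refl. exact IH.
Qed.

Lemma pushR_bounds r k P : 1 <= r ->
  length (fst (pushR r k P)) <= length P /\
  tau r (fst (pushR r k P)) <= tau r P + (r - 1) /\
  (forall k', snd (pushR r k P) = Some k' -> k' <= k + (r - 1) * length P).
Proof.
  intro Hr. revert k. induction P as [|a P IH]; intro k; simpl.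
  - split; [lia|split;[lia|]]. intros k' H; inversion H; lia.
  - destruct (Nat.eqb_spec a k).
    + simpl. split; [lia|split; [lia|]]. discriminate.
    + destruct (Nat.ltb_spec k a).
      * specialize (IH k). destruct (pushR r k P) as [P1 o]. simpl in *.
        destruct IH as [H1 [H2 H3]]. split; [lia|split].
        -- nia.
        -- intros k' Hk. specialize (H3 k' Hk). nia.
      * specialize (IH (k + r - 1)). destruct (pushR r (k + r - 1) P) as [P1 o]. simpl in *.
        destruct IH as [H1 [H2 H3]]. split; [lia|split].
        -- nia.
        -- intros k' Hk. specialize (H3 k' Hk). nia.
Qed.

Lemma winv_pos_snoc N k : winv (pos (N ++ [k])) = (k, true) :: winv (pos N).
Proof. rewrite pos_app, winv_app. reflexivity. Qed.

Lemma normal r w : 1 <= r -> exists P N, Feq r w (pos P ++ winv (pos N)) /\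
  (gen_word r w -> tau r P <= 2 * r * length w /\ tau r N <= 2 * r * length w).
Proof.
  intro Hr. induction w as [|l w IH].
  - exists [], []. split. apply Feq_refl. simpl. lia.
  - destruct IH as [P [N [HF HB]]].
    assert (Hg : gen_word r (l :: w) -> gen_word r w /\ fst l < r).
    { intro H. split. intros l' Hl'. apply H. right; auto. apply H. left; auto. }
    destruct l as [k b]. destruct b.
    + pose proof (pushR_Feq r k P) as HP. pose proof (pushR_bounds r k P Hr) as [B1 [B2 B3]].
      destruct (pushR r k P) as [P1 o]. simpl in *.
      destruct o as [k'|].
      * exists P1, (N ++ [k']). split.
        -- rewrite winv_pos_snoc.
           apply Feq_trans with ((k, true) :: pos P ++ winv (pos N)).
           ++ apply Feq_cons. exact HF.
           ++ pose proof (Feq_app r _ _ (winv (pos N)) (winv (pos N)) HP (Feq_refl _ _)) as H.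
              rewrite <- app_assoc in H. simpl in H. exact H.
        -- intro Hgw. destruct (Hg Hgw) as [Hgw' Hk]. simpl in Hk. destruct (HB Hgw') as [HB1 HB2].
           specialize (B3 k' eq_refl). rewrite tau_app1.
           pose proof (tau_ge_len r P). nia.
      * exists P1, N. split.
        -- apply Feq_trans with ((k, true) :: pos P ++ winv (pos N)).
           ++ apply Feq_cons. exact HF.
           ++ pose proof (Feq_app r _ _ (winv (pos N)) (winv (pos N)) HP (Feq_refl _ _)) as H.
              rewrite <- app_assoc in H. simpl in H. try rewrite app_nil_r in H. exact H.
        -- intro Hgw. destruct (Hg Hgw) as [Hgw' Hk]. destruct (HB Hgw') as [HB1 HB2]. nia.
    + exists (k :: P), N. split.
      * apply Feq_cons. exact HF.
      * intro Hgw. destruct (Hg Hgw) as [Hgw' Hk]. simpl in Hk. destruct (HB Hgw') as [HB1 HB2].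
        simpl. pose proof (tau_ge_len r P). nia.
Qed.

Fixpoint ins (r i : nat) (L : list nat) : list nat :=
  match L with
  | [] => [i]
  | a :: L' => if i <=? a then i :: a :: L' else a :: ins r (i + r - 1) L'
  end.

Fixpoint sort (r : nat) (L : list nat) : list nat :=
  match L with [] => [] | a :: L' => ins r a (sort r L') end.

Fixpoint sorted (L : list nat) : Prop :=
  match L with [] => True | a :: L' => (forall b, In b L' -> a <= b) /\ sorted L' end.

Lemma ins_len r i L : length (ins r i L) = S (length L).
Proof. revert i; induction L; intro i; simpl; auto. destruct (i <=? a); simpl; auto. Qed.

Lemma sort_len r L : length (sort r L) = length L.
Proof. induction L; simpl; auto. rewrite ins_len; auto. Qed.

Lemma ins_Feq r i L : Feq r (pos (i :: L)) (pos (ins r i L)).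
Proof.
  revert i; induction L as [|a L IH]; intro i; simpl. apply Feq_refl.
  destruct (Nat.leb_spec i a). apply Feq_refl.
  apply Feq_trans with ([(a, false); (i + r - 1, false)] ++ pos L).
  - apply (Feq_app r [(i,false);(a,false)] _ (pos L) (pos L)). apply Feq_swap_pos; lia. apply Feq_refl.
  - apply (Feq_cons r (a, false)). apply (IH (i + r - 1)).
Qed.

Lemma sort_Feq r L : Feq r (pos L) (pos (sort r L)).
Proof.
  induction L as [|a L IH]; simpl. apply Feq_refl.
  apply Feq_trans with ((a, false) :: pos (sort r L)).
  apply Feq_cons; auto. apply (ins_Feq r a (sort r L)).
Qed.

Lemma ins_in r i L b : 1 <= r -> In b (ins r i L) -> i <= b \/ In b L.
Proof.
  intro Hr. revert i; induction L as [|a L IH]; intro i; simpl.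
  - intros [H|H]; [lia|tauto].
  - destruct (Nat.leb_spec i a); simpl.
    + intros [H1|[H1|H1]]; subst. left; lia. right; left; auto. right; right; auto.
    + intros [H1|H1]. right; left; auto. destruct (IH _ H1). left; lia. right; right; auto.
Qed.

Lemma ins_sorted r i L : 1 <= r -> sorted L -> sorted (ins r i L).
Proof.
  intro Hr. revert i; induction L as [|a L IH]; intro i; simpl.
  - split; auto. tauto.
  - intros [H1 H2]. destruct (Nat.leb_spec i a); simpl.
    + split. intros b [Hb|Hb]. lia. specialize (H1 b Hb). lia. split; auto.
    + split. intros b Hb. destruct (ins_in _ _ _ _ Hr Hb). lia. auto. apply IH; auto.
Qed.

Lemma sort_sorted r L : 1 <= r -> sorted (sort r L).
Proof. intro Hr. induction L; simpl; auto. apply ins_sorted; auto. Qed.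

Lemma tau_ins r i L : 1 <= r -> tau r (ins r i L) = tau r (i :: L).
Proof.
  intro Hr. revert i; induction L as [|a L IH]; intro i; simpl. auto.
  destruct (Nat.leb_spec i a); simpl. auto.
  rewrite IH, ins_len. simpl. rewrite Nat.mul_succ_r. lia.
Qed.

Lemma tau_sort r L : 1 <= r -> tau r (sort r L) = tau r L.
Proof.
  intro Hr. induction L as [|a L IH]; simpl; auto.
  rewrite tau_ins; auto. simpl. rewrite IH, sort_len. auto.
Qed.

Lemma act_pos_fix r L m s : (forall b, In b L -> m < b) -> act r (pos L) (m, s) = (m, s).
Proof.
  induction L as [|a L IH]; simpl; auto. intro H. rewrite IH; auto.
  unfold actl; simpl. unfold X. specialize (H a (or_introl eq_refl)). natcases; auto; lia.
Qed.

Lemma act_pos_fst r L a s : 1 <= r -> (forall b, In b L -> a <= b) -> fst (act r (pos L) (a, s)) = a.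
Proof.
  intro Hr. induction L as [|b L IH]; simpl; auto. intro H.
  assert (F : fst (act r (pos L) (a, s)) = a) by (apply IH; intros c Hc; apply H; right; auto).
  destruct (act r (pos L) (a, s)) as [m s'] eqn:E. simpl in F. subst m.
  unfold actl; simpl. unfold X. specialize (H b (or_introl eq_refl)). natcases; simpl; lia.
Qed.

Lemma X_self r a s : 1 <= r -> X r a (a, s) = (a, scons 0 s).
Proof. intro Hr. unfold X. natcases; try lia. f_equal. f_equal. lia. Qed.

Definition ones : stream := fun _ => 1.

Lemma sorted_inj r P N : 2 <= r -> sorted P -> sorted N ->
  (forall x, valid r x -> act r (pos P) x = act r (pos N) x) -> P = N.
Proof.
  intro Hr. revert N. induction P as [|a P IH]; intros N HP HN H.
  - destruct N as [|b N]; auto. exfalso.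
    destruct HN as [HN1 HN2].
    specialize (H (b, ones)). simpl in H.
    assert (Hv : valid r (b, ones)) by (intro n; unfold ones; simpl; lia).
    specialize (H Hv).
    destruct (act r (pos N) (b, ones)) as [m s'] eqn:E.
    pose proof (act_pos_fst r N b ones ltac:(lia) HN1) as F. rewrite E in F. simpl in F. subst m.
    unfold actl in H; cbn [fst snd] in H. rewrite X_self in H by lia.
    inversion H as [H1]. assert (Hx : ones 0 = scons 0 s' 0) by (rewrite <- H1; auto).
    unfold ones, scons in Hx. lia.
  - destruct HP as [HP1 HP2].
    assert (Hv : forall m, valid r (m, ones)) by (intros m n; unfold ones; simpl; lia).
    assert (Ka : forall L, (forall b, In b L -> a <= b) -> exists s', act r (pos (a :: L)) (a, ones) = (a, scons 0 s')).
    { intros L HL. simpl. destruct (act r (pos L) (a, ones)) as [m s'] eqn:E.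
      pose proof (act_pos_fst r L a ones ltac:(lia) HL) as F. rewrite E in F. simpl in F. subst m.
      exists s'. unfold actl; simpl. unfold X. natcases; try lia. f_equal. f_equal. lia. }
    destruct N as [|b N].
    + exfalso. destruct (Ka P HP1) as [s' Hs]. specialize (H (a, ones) (Hv a)). rewrite Hs in H.
      simpl in H. inversion H as [H1]. assert (Hx : scons 0 s' 0 = ones 0) by (rewrite H1; auto).
      unfold ones, scons in Hx. lia.
    + destruct HN as [HN1 HN2].
      assert (a = b).
      { destruct (Nat.lt_total a b) as [Hab|[Hab|Hab]]; auto; exfalso.
        - destruct (Ka P HP1) as [s' Hs]. specialize (H (a, ones) (Hv a)). rewrite Hs in H.
          rewrite act_pos_fix in H. inversion H as [H1]. assert (Hx : scons 0 s' 0 = ones 0) by (rewrite H1; auto).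
          unfold ones, scons in Hx. lia.
          intros c [Hc|Hc]. lia. specialize (HN1 c Hc). lia.
        - assert (Kb : exists s', act r (pos (b :: N)) (b, ones) = (b, scons 0 s')).
          { simpl. destruct (act r (pos N) (b, ones)) as [m s'] eqn:E.
            pose proof (act_pos_fst r N b ones ltac:(lia) HN1) as F. rewrite E in F. simpl in F. subst m.
            exists s'. unfold actl; simpl. unfold X. natcases; try lia. f_equal. f_equal. lia. }
          destruct Kb as [s' Hs]. specialize (H (b, ones) (Hv b)). rewrite Hs in H.
          rewrite act_pos_fix in H. inversion H as [H1]. assert (Hx : scons 0 s' 0 = ones 0) by (rewrite <- H1; auto).
          unfold ones, scons in Hx. lia.
          intros c [Hc|Hc]. lia. specialize (HP1 c Hc). lia. }
      subst b. f_equal. apply IH; auto.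
      intros x Hx. specialize (H x Hx). simpl in H.
      unfold actl in H; simpl in H.
      rewrite <- (Xi_X r a (act r (pos P) x)), <- (Xi_X r a (act r (pos N) x)); try lia.
      rewrite H. auto.
Qed.

Theorem faithful r u v : 2 <= r -> (forall x, valid r x -> act r u x = act r v x) -> Feq r u v.
Proof.
  intros Hr H.
  destruct (normal r (u ++ winv v) ltac:(lia)) as [P [N [HF _]]].
  assert (HA : forall x, valid r x -> act r (pos P) x = act r (pos N) x).
  { intros x Hx.
    pose proof (Feq_act r _ _ ltac:(lia) HF (act r (pos N) x) (act_valid _ _ _ Hx)) as E.
    rewrite !act_app in E. rewrite H in E by (apply act_valid; apply act_valid; auto).
    rewrite act_winv_r in E by (try lia; apply act_valid; auto).
    rewrite act_winv_l in E by (try lia; auto). auto. }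
  assert (HS : sort r P = sort r N).
  { apply (sorted_inj r); try apply sort_sorted; try lia. intros x Hx.
    rewrite <- (Feq_act r _ _ ltac:(lia) (sort_Feq r P) x Hx).
    rewrite <- (Feq_act r _ _ ltac:(lia) (sort_Feq r N) x Hx). auto. }
  assert (H0 : Feq r (u ++ winv v) []).
  { apply Feq_trans with (pos P ++ winv (pos N)); auto.
    apply Feq_trans with (pos (sort r P) ++ winv (pos (sort r N))).
    apply Feq_app. apply sort_Feq. apply Feq_winv. apply sort_Feq.
    rewrite HS. apply Feq_winv_r. }
  apply Feq_trans with ((u ++ winv v) ++ v).
  - pose proof (Feq_app r u u _ _ (Feq_refl _ u) (Feq_sym _ _ _ (Feq_winv_l r v))) as E.
    rewrite app_nil_r, app_assoc in E. exact E.
  - pose proof (Feq_app r _ _ v v H0 (Feq_refl _ v)) as E. simpl in E. exact E.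
Qed.


Lemma conj_Feq r L : 1 <= r -> (forall c, In c L -> 1 <= c) ->
  Feq r ([(0, true)] ++ pos L ++ [(0, false)]) (pos (map (fun c => c + (r - 1)) L)).
Proof.
  intro Hr. induction L as [|c L IH]; intro H; simpl.
  - apply (Feq_cancel2 r (0, true)).
  - apply Feq_trans with ([(0, true); (c, false); (0, false)] ++ ([(0,true)] ++ pos L ++ [(0, false)])).
    + apply Feq_sym. pose proof (Feq_cancel r [(0,true);(c,false)] (pos L ++ [(0,false)]) (0,false)) as E.
      simpl in E. simpl. exact E.
    + change ((c + (r - 1), false) :: pos (map (fun c0 => c0 + (r - 1)) L)) with
        ([(c + (r - 1), false)] ++ pos (map (fun c0 => c0 + (r - 1)) L)).
      apply Feq_app.
      * replace (c + (r - 1)) with (c + r - 1). apply Feq_rel2. apply H; left; auto.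
        specialize (H c (or_introl eq_refl)). lia.
      * apply IH. intros c' Hc'. apply H. right; auto.
Qed.

Definition maxl (L : list nat) : nat := fold_right Nat.max 0 L.

Lemma maxl_ge L a : In a L -> a <= maxl L.
Proof. induction L; simpl; [tauto|]. intros [->|H]; [lia|]. specialize (IHL H). lia. Qed.

Lemma maxl_tau r L : maxl L <= tau r L.
Proof. induction L; simpl; lia. Qed.

Fixpoint conv (r n : nat) (Q : list nat) : word :=
  match n with
  | 0 => []
  | S n' => match Q with
            | [] => []
            | b :: Q' => if b <? r then (b, false) :: conv r n' Q'
                         else [(0, true)] ++ conv r n' (map (fun c => c - (r - 1)) Q) ++ [(0, false)]
            end
  end.

Lemma sorted_map_sub k Q : sorted Q -> sorted (map (fun c => c - k) Q).
Proof.
  induction Q as [|a Q IH]; simpl; auto. intros [H1 H2]. split; auto.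
  intros b Hb. apply in_map_iff in Hb. destruct Hb as [x [<- Hx]]. specialize (H1 x Hx). lia.
Qed.

Lemma maxl_map_sub k Q : maxl (map (fun c => c - k) Q) = maxl Q - k.
Proof. induction Q; simpl; auto. rewrite IHQ. lia. Qed.

Lemma conv_spec r : 2 <= r -> forall n Q, sorted Q -> length Q + maxl Q < n ->
  gen_word r (conv r n Q) /\ Feq r (conv r n Q) (pos Q) /\ length (conv r n Q) <= length Q + 2 * maxl Q.
Proof.
  intros Hr n. induction n as [|n IH]; intros Q HQ Hn; [lia|].
  destruct Q as [|b Q'].
  - simpl. split. intros l []. split. apply Feq_refl. lia.
  - simpl. destruct HQ as [HQ1 HQ2]. destruct (Nat.ltb_spec b r).
    + assert (Hm : maxl Q' <= maxl (b :: Q')) by (simpl; lia).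
      destruct (IH Q' HQ2 ltac:(simpl in Hn; lia)) as [G [F L]].
      split; [|split].
      * intros l [<-|Hl]; simpl; auto.
      * apply Feq_cons; auto.
      * simpl. simpl in Hm. lia.
    + set (Q := b :: Q') in *.
      assert (Hall : forall c, In c Q -> r <= c).
      { intros c [<-|Hc]; auto. specialize (HQ1 c Hc). lia. }
      assert (HS : sorted (map (fun c => c - (r - 1)) Q)).
      { apply sorted_map_sub. simpl. split; auto. }
      assert (Hmx : r <= maxl Q) by (apply (Nat.le_trans _ b); [lia| apply maxl_ge; left; auto]).
      destruct (IH (map (fun c => c - (r - 1)) Q) HS) as [G [F L]].
      { rewrite length_map, maxl_map_sub. simpl in Hn |- *. unfold Q in Hmx. simpl in Hmx. lia. }
      split; [|split].
      * intros l [<-|Hl]. simpl; lia.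
        apply in_app_iff in Hl. destruct Hl as [Hl|[<-|[]]]. apply G; auto. simpl; lia.
      * apply Feq_trans with ([(0, true)] ++ pos (map (fun c => c - (r - 1)) Q) ++ [(0, false)]).
        -- apply (Feq_app r [(0,true)] [(0,true)]). apply Feq_refl. apply Feq_app. exact F. apply Feq_refl.
        -- change ((b,false) :: pos Q') with (pos Q). replace (pos Q) with (pos (map (fun c => c + (r - 1)) (map (fun c => c - (r - 1)) Q))).
           apply conj_Feq. lia. intros c Hc. apply in_map_iff in Hc. destruct Hc as [x [<- Hx]].
           specialize (Hall x Hx). lia.
           rewrite map_map. f_equal. rewrite <- (map_id Q) at 2. apply map_ext_in.
           intros a Ha. specialize (Hall a Ha). lia.
      * simpl. rewrite !length_app. rewrite length_map, maxl_map_sub in L. simpl. simpl in L.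
        unfold Q in Hmx |- *. simpl in Hmx |- *. lia.
Qed.

Lemma posgen r P : 2 <= r -> exists u, gen_word r u /\ Feq r u (pos P) /\ length u <= 3 * tau r P.
Proof.
  intro Hr. set (Q := sort r P).
  destruct (conv_spec r Hr (S (length Q + maxl Q)) Q (sort_sorted r P ltac:(lia)) ltac:(lia)) as [G [F L]].
  exists (conv r (S (length Q + maxl Q)) Q). split; auto. split.
  - apply Feq_trans with (pos Q); auto. apply Feq_sym, sort_Feq.
  - pose proof (maxl_tau r Q). pose proof (tau_ge_len r Q).
    unfold Q in *. rewrite tau_sort in * by lia. rewrite sort_len in *. nia.
Qed.


Lemma j1_app d u v : j1 d (u ++ v) = j1 d u ++ j1 d v.
Proof. unfold j1. apply map_app. Qed.

Lemma j1_winv d w : j1 d (winv w) = winv (j1 d w).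
Proof. unfold j1, winv. rewrite map_rev, !map_map. reflexivity. Qed.

Lemma j1_len d w : length (j1 d w) = length w.
Proof. unfold j1. apply length_map. Qed.

Lemma j1_Feq p q d u v : 2 <= p -> 0 < d -> q - 1 = d * (p - 1) ->
  Feq p u v -> Feq q (j1 d u) (j1 d v).
Proof.
  intros Hp Hd Hq H. induction H.
  - apply Feq_refl.
  - apply Feq_sym; auto.
  - eapply Feq_trans; eauto.
  - rewrite !j1_app. pose proof (Feq_cancel q (j1 d u) (j1 d v) (d * fst x, snd x)) as E.
    destruct x as [a b]. unfold j1 at 2. simpl. simpl in E. exact E.
  - rewrite !j1_app. unfold j1 at 2 4. simpl.
    replace (d * (j + p - 1)) with (d * j + q - 1) by nia.
    apply (Feq_rel q (j1 d u) (j1 d v) (d * i) (d * j)). nia.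
Qed.

Lemma j1_gen p q d u : 0 < d -> q - 1 = d * (p - 1) -> 2 <= q -> gen_word p u -> gen_word q (j1 d u).
Proof.
  intros Hd Hq Hq2 H l Hl. unfold j1 in Hl. apply in_map_iff in Hl. destruct Hl as [[a b] [<- Ha]].
  specialize (H _ Ha). simpl in *. nia.
Qed.

Definition psi (d : nat) (s : stream) : stream := fun n => d * s n.
Definition Psi (d : nat) (x : point) : point := (d * fst x, psi d (snd x)).

Lemma X_lo r a m s : m < a -> X r a (m, s) = (m, s).
Proof. intro H. unfold X. natcases; auto; lia. Qed.
Lemma X_mid r a m s : a <= m -> m < a + r -> X r a (m, s) = (a, scons (m - a) s).
Proof. intros H1 H2. unfold X. natcases; auto; lia. Qed.
Lemma X_hi r a m s : a + r <= m -> X r a (m, s) = (m - (r - 1), s).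
Proof. intros H1. unfold X. natcases; auto; lia. Qed.

Lemma Psi_X p q d a x : 2 <= p -> 0 < d -> q - 1 = d * (p - 1) ->
  X q (d * a) (Psi d x) = Psi d (X p a x).
Proof.
  intros Hp Hd Hq. destruct x as [m s]. unfold Psi; cbn [fst snd].
  destruct (Nat.ltb_spec m a).
  - rewrite X_lo by nia. rewrite X_lo by lia. auto.
  - destruct (Nat.ltb_spec m (a + p)).
    + rewrite X_mid by nia. rewrite X_mid by lia. cbn [fst snd]. f_equal.
      apply functional_extensionality. intros [|n]; unfold psi, scons; simpl; nia.
    + rewrite X_hi by nia. rewrite X_hi by lia. cbn [fst snd]. f_equal. nia.
Qed.

Lemma Psi_Xi p q d a x : 2 <= p -> 0 < d -> q - 1 = d * (p - 1) ->
  Xi q (d * a) (Psi d x) = Psi d (Xi p a x).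
Proof.
  intros Hp Hd Hq. destruct x as [m s]. unfold Psi, Xi; simpl.
  destruct (Nat.ltb_spec m a).
  - destruct (Nat.ltb_spec (d * m) (d * a)); [auto|nia].
  - destruct (Nat.ltb_spec (d * m) (d * a)); [nia|].
    destruct (Nat.eqb_spec m a).
    + subst. destruct (Nat.eqb_spec (d * a) (d * a)); [|lia]. simpl. f_equal. unfold psi. nia.
    + destruct (Nat.eqb_spec (d * m) (d * a)); [nia|]. simpl. f_equal. nia.
Qed.

Lemma Psi_act p q d w x : 2 <= p -> 0 < d -> q - 1 = d * (p - 1) ->
  act q (j1 d w) (Psi d x) = Psi d (act p w x).
Proof.
  intros Hp Hd Hq. induction w as [|[a b] w IH]; simpl; auto.
  rewrite IH. unfold actl; simpl. destruct b.
  - apply Psi_Xi; auto.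
  - apply Psi_X; auto.
Qed.

Definition Img (d : nat) (x : point) : Prop := fst x mod d = 0 /\ forall n, snd x n mod d = 0.

Lemma Img_Psi d y : 0 < d -> Img d (Psi d y).
Proof.
  intro Hd. unfold Img, Psi, psi; simpl. split.
  - rewrite Nat.mul_comm. apply Nat.Div0.mod_mul.
  - intro n. rewrite Nat.mul_comm. apply Nat.Div0.mod_mul.
Qed.

Definition unPsi (d : nat) (x : point) : point := (fst x / d, fun n => snd x n / d).

Lemma Psi_unPsi d x : 0 < d -> Img d x -> Psi d (unPsi d x) = x.
Proof.
  intros Hd [H1 H2]. destruct x as [m s]. unfold Psi, unPsi, psi; simpl in *. f_equal.
  - rewrite (Nat.div_mod_eq m d) at 2. rewrite H1. lia.
  - apply functional_extensionality. intro n. rewrite (Nat.div_mod_eq (s n) d) at 2. rewrite H2. lia.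
Qed.

Lemma unPsi_valid p q d x : 2 <= p -> 0 < d -> q - 1 = d * (p - 1) -> valid q x -> Img d x -> valid p (unPsi d x).
Proof.
  intros Hp Hd Hq Hv HI n. unfold unPsi; simpl.
  pose proof (Psi_unPsi d x Hd HI) as E. specialize (Hv n).
  rewrite <- E in Hv. unfold Psi, psi, unPsi in Hv. simpl in Hv. nia.
Qed.

Lemma Psi_valid p q d y : 2 <= p -> 0 < d -> q - 1 = d * (p - 1) -> valid p y -> valid q (Psi d y).
Proof. intros Hp Hd Hq Hv n. unfold Psi, psi; simpl. specialize (Hv n). nia. Qed.

Lemma Psi_inj d x y : 0 < d -> Psi d x = Psi d y -> x = y.
Proof.
  intros Hd H. destruct x as [m s], y as [m' s']. unfold Psi, psi in H; simpl in H. inversion H as [[H1 H2]].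
  f_equal. nia. apply functional_extensionality. intro n.
  assert (E : d * s n = d * s' n) by (change ((fun n => d * s n) n = (fun n => d * s' n) n); rewrite H2; auto).
  nia.
Qed.


Definition im0 (d : nat) : nat -> bool := fun i => i mod d =? 0.
Definition upd (q d : nat) (im : nat -> bool) (a : nat) : nat -> bool :=
  fun i => if i <? a then im i else if i <? a + q then im a && ((i - a) mod d =? 0) else im (i - (q - 1)).
Fixpoint cnt (im : nat -> bool) (n : nat) : nat :=
  match n with 0 => 0 | S n' => cnt im n' + (if im n' then 1 else 0) end.
Definition step (q d : nat) (st : (nat -> bool) * list nat) (a : nat) : (nat -> bool) * list nat :=
  (upd q d (fst st) a, if fst st a then snd st ++ [cnt (fst st) a] else snd st).
Definition pull (q d : nat) (P : list nat) : (nat -> bool) * list nat :=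
  fold_left (step q d) P (im0 d, []).

Lemma cnt_mono im i j : i <= j -> cnt im i <= cnt im j.
Proof. induction 1; simpl; lia. Qed.

Lemma cnt_le im n : cnt im n <= n.
Proof. induction n; simpl; [lia|]. destruct (im n); lia. Qed.

Lemma cnt_lt im i j : im i = true -> i < j -> cnt im i < cnt im j.
Proof.
  intros H1 H2. pose proof (cnt_mono im (S i) j H2). simpl in H. rewrite H1 in H. lia.
Qed.

Lemma cnt_ext im im' n : (forall i, im i = im' i) -> cnt im n = cnt im' n.
Proof. intro H. induction n; simpl; auto. rewrite IHn, H. auto. Qed.

Lemma cnt_upd_lo q d im a i : i <= a -> cnt (upd q d im a) i = cnt im i.
Proof.
  induction i; intro H; simpl; auto. rewrite IHi by lia. unfold upd.
  destruct (Nat.ltb_spec i a); [auto|lia].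
Qed.

Lemma cnt_upd_mid q d im a c : c <= q ->
  cnt (upd q d im a) (a + c) = cnt im a + (if im a then cnt (im0 d) c else 0).
Proof.
  induction c; intro H.
  - rewrite Nat.add_0_r, cnt_upd_lo by lia. destruct (im a); simpl; lia.
  - rewrite Nat.add_succ_r. simpl. rewrite IHc by lia. unfold upd.
    destruct (Nat.ltb_spec (a + c) a); [lia|]. destruct (Nat.ltb_spec (a + c) (a + q)); [|lia].
    replace (a + c - a) with c by lia. unfold im0. destruct (im a); simpl; lia.
Qed.

Lemma cnt_upd_hi q d im a e : 1 <= q ->
  cnt (upd q d im a) (a + q + e) + cnt im (S a) = cnt (upd q d im a) (a + q) + cnt im (S a + e).
Proof.
  intro Hq. induction e.
  - rewrite !Nat.add_0_r. lia.
  - replace (a + q + S e) with (S (a + q + e)) by lia. replace (S a + S e) with (S (S a + e)) by lia.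
    simpl cnt at 1 3. unfold upd at 2.
    destruct (Nat.ltb_spec (a + q + e) a); [lia|]. destruct (Nat.ltb_spec (a + q + e) (a + q)); [lia|].
    replace (a + q + e - (q - 1)) with (S a + e) by lia.
    change (cnt im (S (S a + e))) with (cnt im (S a + e) + (if im (S a + e) then 1 else 0)).
    destruct (im (S a + e)); lia.
Qed.

Lemma cnt_im0_aux d k c : 0 < d -> 1 <= c <= d -> cnt (im0 d) (d * k) = k -> cnt (im0 d) (d * k + c) = S k.
Proof.
  intros Hd Hc Hk. induction c as [|c IH]; [lia|].
  rewrite Nat.add_succ_r. simpl. destruct (Nat.eq_dec c 0).
  - subst. rewrite Nat.add_0_r, Hk. unfold im0. rewrite (Nat.mul_comm d k), Nat.Div0.mod_mul. simpl. lia.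
  - rewrite IH by lia. unfold im0.
    replace (d * k + c) with (c + k * d) by lia. rewrite Nat.Div0.mod_add.
    rewrite Nat.mod_small by lia. destruct (Nat.eqb_spec c 0); lia.
Qed.

Lemma cnt_im0_mul d k : 0 < d -> cnt (im0 d) (d * k) = k.
Proof.
  intro Hd. induction k. rewrite Nat.mul_0_r. auto.
  replace (d * S k) with (d * k + d) by lia. apply cnt_im0_aux; auto; lia.
Qed.

Lemma cnt_im0_q p q d : 2 <= p -> 0 < d -> q - 1 = d * (p - 1) -> 2 <= q -> cnt (im0 d) q = p.
Proof.
  intros Hp Hd Hq Hq2. replace q with (d * (p - 1) + 1) by lia.
  rewrite (cnt_im0_aux d (p - 1) 1); auto; try lia. apply cnt_im0_mul; auto.
Qed.

Lemma act_pos_snoc r L a x : act r (pos (L ++ [a])) x = act r (pos L) (X r a x).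
Proof. rewrite pos_app, act_app. reflexivity. Qed.

Lemma pull_snoc q d L a : pull q d (L ++ [a]) = step q d (pull q d L) a.
Proof. unfold pull. rewrite fold_left_app. reflexivity. Qed.

Lemma pull_inv p q d : 2 <= p -> 0 < d -> q - 1 = d * (p - 1) -> 2 <= q ->
  forall P' im Q, pull q d P' = (im, Q) ->
  (forall i t, Img d (act q (pos P') (i, t)) <-> (im i = true /\ forall n, t n mod d = 0)) /\
  (forall i s, im i = true -> act q (pos P') (i, psi d s) = Psi d (act p (pos Q) (cnt im i, s))) /\
  length Q <= length P' /\ tau p Q <= tau q P'.
Proof.
  intros Hp Hd Hq Hq2 P'. induction P' as [|a P'' IH] using rev_ind; intros im' Q' E.
  - unfold pull in E. simpl in E. inversion E; subst. split; [|split; [|split]].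
    + intros i t. simpl. unfold Img, im0; simpl. split.
      * intros [H1 H2]. split; auto. apply Nat.eqb_eq; auto.
      * intros [H1 H2]. split; auto. apply Nat.eqb_eq; auto.
    + intros i s H. unfold im0 in H. apply Nat.eqb_eq in H. simpl. unfold Psi; simpl. f_equal.
      assert (Hk : i = d * (i / d)) by (rewrite (Nat.div_mod_eq i d) at 1; rewrite H; lia).
      rewrite Hk at 2. rewrite cnt_im0_mul by auto. exact Hk.
    + simpl; lia.
    + simpl; lia.
  - rewrite pull_snoc in E. destruct (pull q d P'') as [im Q] eqn:E0.
    destruct (IH im Q eq_refl) as [I1 [I2 [B1 B2]]].
    unfold step in E. simpl in E. inversion E; subst im' Q'. clear E.
    set (b := cnt im a).
    split; [|split; [|split]].
    + intros i t. rewrite act_pos_snoc.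
      destruct (Nat.ltb_spec i a).
      * rewrite X_lo by auto. rewrite I1. unfold upd. destruct (Nat.ltb_spec i a); [tauto|lia].
      * destruct (Nat.ltb_spec i (a + q)).
        -- rewrite X_mid by auto. rewrite I1. unfold upd.
           destruct (Nat.ltb_spec i a); [lia|]. destruct (Nat.ltb_spec i (a + q)); [|lia].
           split.
           ++ intros [A1 A2]. rewrite A1. split.
              ** specialize (A2 0). simpl in A2. rewrite A2. auto.
              ** intro n. specialize (A2 (S n)). simpl in A2. auto.
           ++ intros [A1 A2]. apply andb_true_iff in A1. destruct A1 as [A1 A3].
              apply Nat.eqb_eq in A3. split; auto. intros [|n]; simpl; auto.
        -- rewrite X_hi by auto. rewrite I1. unfold upd.
           destruct (Nat.ltb_spec i a); [lia|]. destruct (Nat.ltb_spec i (a + q)); [lia|]. tauto.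
    + intros i s Hi. rewrite act_pos_snoc.
      assert (Hsnoc : forall c s0, im a = true -> act p (pos (Q ++ [b])) (c, s0) = act p (pos Q) (X p b (c, s0)))
        by (intros; apply act_pos_snoc).
      destruct (Nat.ltb_spec i a).
      * unfold upd in Hi. destruct (Nat.ltb_spec i a); [|lia].
        rewrite X_lo by auto. rewrite I2 by auto. rewrite cnt_upd_lo by lia.
        destruct (im a) eqn:Ea; auto.
        rewrite Hsnoc by auto. rewrite X_lo; auto. apply cnt_lt; auto.
      * destruct (Nat.ltb_spec i (a + q)).
        -- unfold upd in Hi. destruct (Nat.ltb_spec i a); [lia|]. destruct (Nat.ltb_spec i (a + q)); [|lia].
           apply andb_true_iff in Hi. destruct Hi as [Ha Hm]. apply Nat.eqb_eq in Hm.
           set (k := (i - a) / d).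
           assert (Hk : i - a = d * k) by (unfold k; rewrite (Nat.div_mod_eq (i - a) d) at 1; rewrite Hm; lia).
           assert (Hkp : k < p) by nia.
           rewrite X_mid by auto.
           replace (scons (i - a) (psi d s)) with (psi d (scons k s)).
           2:{ apply functional_extensionality. intros [|n]; unfold psi, scons; simpl; lia. }
           rewrite I2 by auto. rewrite Ha. rewrite Hsnoc by auto.
           replace (cnt (upd q d im a) i) with (cnt (upd q d im a) (a + (i - a))) by (f_equal; lia).
           rewrite cnt_upd_mid by lia. rewrite Ha. rewrite Hk, cnt_im0_mul by auto.
           fold b. rewrite X_mid by lia. f_equal. f_equal. f_equal. f_equal. lia.
        -- set (e := i - a - q).
           assert (Hie : i = a + q + e) by (unfold e; lia).
           unfold upd in Hi. destruct (Nat.ltb_spec i a); [lia|]. destruct (Nat.ltb_spec i (a + q)); [lia|].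
           rewrite X_hi by auto. rewrite I2 by auto.
           pose proof (cnt_upd_hi q d im a e ltac:(lia)) as HH.
           rewrite <- Hie in HH. rewrite (cnt_upd_mid q d im a q) in HH by lia.
           change (cnt im (S a)) with (cnt im a + (if im a then 1 else 0)) in HH.
           replace (i - (q - 1)) with (S a + e) by lia.
           destruct (im a) eqn:Ea.
           ++ rewrite (cnt_im0_q p q d) in HH by auto.
              rewrite Hsnoc by auto.
              assert (Hge : cnt im (S a) <= cnt im (S a + e)) by (apply cnt_mono; lia).
              change (cnt im (S a)) with (cnt im a + (if im a then 1 else 0)) in Hge.
              rewrite Ea in Hge. fold b in Hge, HH.
              rewrite X_hi by lia. f_equal. f_equal. f_equal. lia.
           ++ f_equal. f_equal. f_equal. lia.
    + destruct (im a); simpl; rewrite ?length_app; simpl; lia.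
    + rewrite tau_app1. destruct (im a).
      * rewrite tau_app1. pose proof (cnt_le im a). fold b in H. assert (p <= q) by nia. lia.
      * lia.
Qed.


Lemma X_fst_le r a y : fst (X r a y) <= fst y.
Proof. destruct y as [m s]. unfold X. natcases; simpl; lia. Qed.

Lemma act_pos_fst_le r L y : fst (act r (pos L) y) <= fst y.
Proof.
  induction L as [|a L IH]; simpl; auto.
  unfold actl; simpl. pose proof (X_fst_le r a (act r (pos L) y)). lia.
Qed.

Lemma cnt_unbounded im : (forall n, exists i, n <= i /\ im i = true) -> forall j, exists n, j <= cnt im n.
Proof.
  intros H j. induction j.
  - exists 0; lia.
  - destruct IHj as [n Hn]. destruct (H n) as [i [Hi1 Hi2]].
    exists (S i). simpl. rewrite Hi2. pose proof (cnt_mono im n i Hi1). lia.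
Qed.

Lemma ex_min (P : nat -> Prop) : (exists n, P n) -> exists n, P n /\ forall m, m < n -> ~ P m.
Proof.
  intros [n Hn]. induction n as [n IH] using (well_founded_induction lt_wf).
  destruct (classic (exists m, m < n /\ P m)) as [[m [Hm1 Hm2]]|Hno].
  - apply (IH m Hm1 Hm2).
  - exists n. split; auto. intros m Hm HP. apply Hno. exists m; auto.
Qed.

Lemma cnt_hit im : (forall n, exists i, n <= i /\ im i = true) -> forall j, exists i, im i = true /\ cnt im i = j.
Proof.
  intros H j. destruct (cnt_unbounded im H (S j)) as [n0 Hn0].
  destruct (ex_min (fun n => S j <= cnt im n) (ex_intro _ n0 Hn0)) as [n [Hn Hmin]].
  destruct n as [|i]. simpl in Hn; lia.
  assert (Hi : cnt im i <= j) by (destruct (Nat.le_gt_cases (S j) (cnt im i)); [exfalso; apply (Hmin i); auto|]; lia).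
  simpl in Hn. exists i. destruct (im i); split; auto; lia.
Qed.

Definition zero_s : stream := fun _ => 0.

Lemma pullback_correct p q d g P' N' : 2 <= p -> 0 < d -> q - 1 = d * (p - 1) -> 2 <= q ->
  Feq q (j1 d g) (pos P' ++ winv (pos N')) ->
  forall imP P imN N, pull q d P' = (imP, P) -> pull q d N' = (imN, N) ->
  forall x, valid p x -> act p g x = act p (pos P ++ winv (pos N)) x.
Proof.
  intros Hp Hd Hq Hq2 HF imP P imN N EP EN x Hx.
  destruct (pull_inv p q d Hp Hd Hq Hq2 P' imP P EP) as [IP1 [IP2 _]].
  destruct (pull_inv p q d Hp Hd Hq Hq2 N' imN N EN) as [IN1 [IN2 _]].
  set (f := act q (j1 d g)).
  assert (F1 : forall z, valid q z -> f (act q (pos N') z) = act q (pos P') z).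
  { intros z Hz. unfold f. rewrite (Feq_act q _ _ ltac:(lia) HF) by (apply act_valid; auto).
    rewrite act_app. rewrite act_winv_l; auto; lia. }
  assert (F2 : forall y, f (Psi d y) = Psi d (act p g y)).
  { intro y. unfold f. apply Psi_act; auto. }
  assert (F3 : forall z, valid q z -> (Img d (f z) <-> Img d z)).
  { intros z Hz. split; intro HI.
    - assert (Hfz : valid q (f z)) by (apply act_valid; auto).
      set (w' := unPsi d (f z)).
      assert (Hw' : valid p w') by (exact (unPsi_valid p q d (f z) Hp Hd Hq Hfz HI)).
      assert (E : z = act q (j1 d (winv g)) (Psi d w')).
      { unfold w'. rewrite Psi_unPsi by auto. rewrite j1_winv. unfold f. rewrite act_winv_l; auto; lia. }
      rewrite E, (Psi_act p q d) by auto. apply Img_Psi; auto.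
    - set (w' := unPsi d z).
      assert (Hw' : valid p w') by (exact (unPsi_valid p q d z Hp Hd Hq Hz HI)).
      assert (E : z = Psi d w') by (unfold w'; rewrite Psi_unPsi; auto).
      rewrite E, F2. apply Img_Psi; auto. }
  assert (Hzero : forall n, zero_s n mod d = 0) by (intro n; unfold zero_s; apply Nat.Div0.mod_0_l).
  assert (Hzv : forall i, valid q (i, zero_s)) by (intros i n; unfold zero_s; simpl; lia).
  assert (F4 : forall i, imP i = imN i).
  { intro i. destruct (imP i) eqn:E1, (imN i) eqn:E2; auto.
    - exfalso. assert (H1 : Img d (act q (pos P') (i, zero_s))) by (apply IP1; auto).
      rewrite <- (F1 (i, zero_s) (Hzv i)) in H1.
      apply (proj1 (F3 _ (act_valid _ _ _ (Hzv i)))) in H1.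
      apply IN1 in H1. destruct H1; congruence.
    - exfalso. assert (H1 : Img d (act q (pos N') (i, zero_s))) by (apply IN1; auto).
      apply (proj2 (F3 _ (act_valid _ _ _ (Hzv i)))) in H1.
      rewrite (F1 (i, zero_s) (Hzv i)) in H1. apply IP1 in H1. destruct H1; congruence. }
  assert (F5 : forall n, exists i, n <= i /\ imN i = true).
  { intro n. set (z := (d * n, zero_s)).
    assert (Hz : valid q z) by (intros k; unfold z, zero_s; simpl; lia).
    set (w := act q (winv (pos N')) z).
    assert (Ew : act q (pos N') w = z) by (unfold w; apply act_winv_r; auto; lia).
    destruct w as [i t] eqn:Ewi.
    assert (HI : Img d (act q (pos N') (i, t))).
    { rewrite Ew. unfold z. split; simpl. rewrite Nat.mul_comm. apply Nat.Div0.mod_mul. auto. }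
    apply IN1 in HI. destruct HI as [HI _]. exists i. split; auto.
    pose proof (act_pos_fst_le q N' (i, t)) as Hle. rewrite Ew in Hle. unfold z in Hle. simpl in Hle. nia. }
  set (y := act p (winv (pos N)) x).
  assert (Hy : valid p y) by (apply act_valid; auto).
  assert (Ex : act p (pos N) y = x) by (unfold y; apply act_winv_r; auto; lia).
  destruct y as [j s] eqn:Ey.
  destruct (cnt_hit imN F5 j) as [i [Hi1 Hi2]].
  rewrite act_app. fold y. rewrite Ey.
  apply (Psi_inj d); auto.
  rewrite <- F2. rewrite <- Ex. rewrite <- Hi2.
  rewrite <- (IN2 i s Hi1).
  rewrite F1. 2:{ apply (Psi_valid p q d (i, s)); auto. }
  assert (HiP : imP i = true) by (rewrite F4; auto).
  rewrite (IP2 i s HiP). f_equal. f_equal. f_equal. apply cnt_ext; auto.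
Qed.


Lemma gen_winv r u : gen_word r u -> gen_word r (winv u).
Proof.
  intros H l Hl. unfold winv in Hl. apply in_rev in Hl. apply in_map_iff in Hl.
  destruct Hl as [l' [<- Hl']]. destruct l'. simpl. apply (H _ Hl').
Qed.

Lemma gen_app r u v : gen_word r u -> gen_word r v -> gen_word r (u ++ v).
Proof. intros H1 H2 l Hl. apply in_app_iff in Hl. destruct Hl; auto. Qed.

Lemma gen_bound r P N : 2 <= r -> exists u, gen_word r u /\ Feq r u (pos P ++ winv (pos N)) /\
  length u <= 3 * tau r P + 3 * tau r N.
Proof.
  intro Hr. destruct (posgen r P Hr) as [u1 [G1 [F1 L1]]]. destruct (posgen r N Hr) as [u2 [G2 [F2 L2]]].
  exists (u1 ++ winv u2). split; [|split].
  - apply gen_app; auto. apply gen_winv; auto.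
  - apply Feq_app; auto. apply Feq_winv; auto.
  - rewrite length_app. unfold winv. rewrite length_rev, length_map. lia.
Qed.

Lemma gen_exists r g : 2 <= r -> exists u, gen_word r u /\ Feq r u g.
Proof.
  intro Hr. destruct (normal r g ltac:(lia)) as [P [N [HF _]]].
  destruct (gen_bound r P N Hr) as [u [G [F _]]]. exists u. split; auto.
  apply Feq_trans with (pos P ++ winv (pos N)); auto. apply Feq_sym; auto.
Qed.

Lemma wordlen_spec r g : 2 <= r -> is_wordlen r g (wordlen r g).
Proof.
  intro Hr. unfold wordlen. apply epsilon_spec.
  destruct (gen_exists r g Hr) as [u0 [G0 F0]].
  destruct (ex_min (fun n => exists u, gen_word r u /\ Feq r u g /\ length u = n)
              (ex_intro _ (length u0) (ex_intro _ u0 (conj G0 (conj F0 eq_refl))))) as [n [Hn Hmin]].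
  exists n. split; auto. intros u G F.
  destruct (Nat.le_gt_cases n (length u)); auto. exfalso. apply (Hmin (length u)); auto.
  exists u; auto.
Qed.

Lemma wordlen_le r g u : 2 <= r -> gen_word r u -> Feq r u g -> wordlen r g <= length u.
Proof. intros Hr G F. destruct (wordlen_spec r g Hr) as [_ H]. apply H; auto. Qed.

Lemma wordlen_ex r g : 2 <= r -> exists u, gen_word r u /\ Feq r u g /\ length u = wordlen r g.
Proof. intros Hr. destruct (wordlen_spec r g Hr) as [H _]. exact H. Qed.

Lemma upper p q d g : 2 <= p -> 2 <= q -> 0 < d -> q - 1 = d * (p - 1) ->
  wordlen q (j1 d g) <= wordlen p g.
Proof.
  intros Hp Hq2 Hd Hq. destruct (wordlen_ex p g Hp) as [u [G [F L]]].
  rewrite <- L, <- (j1_len d u). apply wordlen_le; auto.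
  apply (j1_gen p q d); auto. apply (j1_Feq p q d); auto.
Qed.

Lemma lower p q d g : 2 <= p -> 2 <= q -> 0 < d -> q - 1 = d * (p - 1) ->
  wordlen p g <= 12 * q * wordlen q (j1 d g).
Proof.
  intros Hp Hq2 Hd Hq. destruct (wordlen_ex q (j1 d g) Hq2) as [u' [G' [F' L']]].
  destruct (normal q u' ltac:(lia)) as [P' [N' [HF HB]]]. destruct (HB G') as [B1 B2].
  assert (HF2 : Feq q (j1 d g) (pos P' ++ winv (pos N'))) by (eapply Feq_trans; [apply Feq_sym; exact F'|exact HF]).
  destruct (pull q d P') as [imP P] eqn:EP. destruct (pull q d N') as [imN N] eqn:EN.
  destruct (pull_inv p q d Hp Hd Hq Hq2 P' imP P EP) as [_ [_ [_ TP]]].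
  destruct (pull_inv p q d Hp Hd Hq Hq2 N' imN N EN) as [_ [_ [_ TN]]].
  pose proof (pullback_correct p q d g P' N' Hp Hd Hq Hq2 HF2 imP P imN N EP EN) as PC.
  assert (Fg : Feq p g (pos P ++ winv (pos N))) by (apply faithful; auto).
  destruct (gen_bound p P N Hp) as [u [G [F L]]].
  assert (W : wordlen p g <= length u).
  { apply wordlen_le; auto. eapply Feq_trans; [exact F|apply Feq_sym; exact Fg]. }
  rewrite L' in B1, B2. nia.
Qed.


Open Scope R_scope.

Theorem proposition8 (p q d : nat) :
  (2 <= p)%nat -> (2 <= q)%nat -> (0 < d)%nat -> (q - 1 = d * (p - 1))%nat ->
  exists C K : R, 1 <= C /\ 0 <= K /\
    forall a b : word,
      / C * INR (Fdist p a b) - K <= INR (Fdist q (j1 d a) (j1 d b)) /\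
      INR (Fdist q (j1 d a) (j1 d b)) <= C * INR (Fdist p a b) + K.
Proof.
  intros Hp Hq Hd Hqd.
  exists (INR (12 * q)), 0. 
  assert (HC : 1 <= INR (12 * q)).
  { replace 1 with (INR 1) by reflexivity. apply le_INR. lia. }
  split; [exact HC|split; [lra|]].
  intros a b.
  assert (E : Fdist q (j1 d a) (j1 d b) = wordlen q (j1 d (winv a ++ b))).
  { unfold Fdist. rewrite j1_app, j1_winv. reflexivity. }
  rewrite E. unfold Fdist.
  pose proof (upper p q d (winv a ++ b) Hp Hq Hd Hqd) as U.
  pose proof (lower p q d (winv a ++ b) Hp Hq Hd Hqd) as Lo.
  set (x := wordlen p (winv a ++ b)) in *. set (y := wordlen q (j1 d (winv a ++ b))) in *.
  apply le_INR in U. apply le_INR in Lo. rewrite mult_INR in Lo.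
  assert (Hx : 0 <= INR x) by apply pos_INR.
  assert (Hy : 0 <= INR y) by apply pos_INR.
  split.
  - rewrite Rminus_0_r. apply (Rmult_le_reg_l (INR (12 * q))). lra.
    rewrite <- Rmult_assoc, Rinv_r by lra. lra.
  - nra.
Qed.
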